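(* Let $A$ be any set and $C\subseteq A\times A$ (equivalently a map $C:A\times A\to\{0,1\}$). Then the diagonal set $z=\{b\in A\mid (b,b)\in C\}$ can be written as a (possibly infinite) union of (possibly infinite) intersections of subsets of $A$ that are rows $\{b\mid (a,b)\in C\}$ or columns $\{b\mid (b,a)\in C\}$ $(a\in A)$ of $C$. *)

(* Defs.v *)
Definition row {A : Type} (C : A -> A -> Prop) (a : A) : A -> Prop :=
  fun b => C a b.

Definition col {A : Type} (C : A -> A -> Prop) (a : A) : A -> Prop :=
  fun b => C b a.

Definition diag {A : Type} (C : A -> A -> Prop) : A -> Prop :=
  fun b => C b b.

Definition rowcol {A : Type} (C : A -> A -> Prop) (a : A) (s : bool) : A -> Prop :=
  if s then row C a else col C a.

(* Main.v *)
Require Import Defs.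

Theorem lemma2p4 (A : Type) (C : A -> A -> Prop) :
  exists (I : Type) (J : I -> Type) (a : forall i : I, J i -> A)
         (r : forall i : I, J i -> bool),
    forall b : A, diag C b <-> (exists i : I, forall j : J i, rowcol C (a i j) (r i j) b).
Proof.
  exists {b : A | C b b}.
  exists (fun i => ({a : A | C a (proj1_sig i)} + {a : A | C (proj1_sig i) a})%type).
  exists (fun i j => match j with inl x => proj1_sig x | inr x => proj1_sig x end).
  exists (fun i j => match j with inl _ => true | inr _ => false end).
  intros b; split.
  - intros Hb. exists (exist _ b Hb). intros [[x Hx]|[x Hx]]; exact Hx.
  - intros [[c Hc] H]. simpl in H.
    assert (H1 : C c b) by exact (H (inl (exist _ c Hc))).
    exact (H (inr (exist _ b H1))).
Qed.
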